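(* Let $T$ be a tree and $v\in V(T)$. Root $T$ at $v$ and let $\bar T_v$ be a pruning of this rooted tree. Then (a) $v\in\mathcal{A}(T)$ if and only if $|C^2_{\bar T_v}(v)|=0$ and $|C^1_{\bar T_v}(v)|\le 1$; (b) $v\in\mathcal{N}(T)$ if and only if $|C^2_{\bar T_v}(v)|=2$ or $|C^1_{\bar T_v}(v)|+|C^2_{\bar T_v}(v)|\ge 3$.
   Context: All graphs are finite, simple and undirected. A dissociation set of a graph $G$ is a set $F\subseteq V(G)$ such that $G[F]$ has maximum degree at most $1$; a maximum dissociation set is one of maximum cardinality. $\mathcal{A}(G)$ is the set of vertices contained in every maximum dissociation set of $G$; $\mathcal{N}(G)$ is the set of vertices contained in no maximum dissociation set of $G$. In a rooted tree, for a vertex $u$, $C(u)$ is the set of children of $u$, $D[u]$ is the set consisting of $u$ and all its descendants, and $T_u$ is the subtree induced by $D[u]$. A branch vertex is a vertex of degree at least $3$. Pruning: let $T$ be rooted at $v$. While the current tree has a branch vertex different from $v$, choose such a branch vertex $u\ne v$ at maximum distance from $v$; then every proper descendant of $u$ has degree at most $2$, so for each child $w$ of $u$ the subtree $T_w$ is a path with end vertex $w$, and for $i\in\{0,1,2\}$ let $C^i(u)$ be the set of children $w$ of $u$ with $|V(T_w)|\equiv i \pmod 3$. If $|C^2(u)|\ge 1$ or $|C^1(u)|\ge 2$, delete all vertices of $D[u]$; if $|C^2(u)|=0$ and $|C^1(u)|\le 1$, delete all vertices of $D[w]$ for every $w\in C(u)\setminus\{z\}$, where $z$ is the unique vertex of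 $C^1(u)$ if $|C^1(u)|=1$ and an arbitrary child of $u$ otherwise. When no branch vertex other than $v$ remains, the resulting tree is called a pruning of $T$. In the pruning $\bar T_v$, every vertex other than $v$ has degree at most $2$, so for each child $w$ of $v$ in $\bar T_v$ the subtree of $\bar T_v$ induced by $w$ and its descendants is a path with end vertex $w$; for $i\in\{0,1,2\}$, $C^i_{\bar T_v}(v)$ is the set of children $w$ of $v$ in $\bar T_v$ for which this path has a number of vertices congruent to $i$ modulo $3$. *)

(* Defs.v *)
From mathcomp Require Import all_boot.
Set Implicit Arguments. Unset Strict Implicit. Unset Printing Implicit Defensive.

Section Defs.
Variables (T : finType) (adj : rel T).

Definition simple_graph : Prop := symmetric adj /\ irreflexive adj.

Definition has_cycle : Prop :=
  exists c : seq T, [/\ 3 <= size c, uniq c & cycle adj c].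

Definition is_tree : Prop :=
  [/\ 0 < #|T|, (forall x y, connect adj x y) & ~ has_cycle].

Definition dissociation (F : {set T}) : bool :=
  [forall x in F, #|[set y in F | adj x y]| <= 1].

Definition max_dissociation (F : {set T}) : Prop :=
  dissociation F /\ forall F' : {set T}, dissociation F' -> #|F'| <= #|F|.

(** A(G): vertices in every maximum dissociation set; N(G): in none *)
Definition in_all_max (x : T) : Prop :=
  forall F, max_dissociation F -> x \in F.
Definition in_no_max (x : T) : Prop :=
  forall F, max_dissociation F -> x \notin F.

(** Current tree = subgraph induced by the vertex set S. *)
Definition radj (S : {set T}) : rel T :=
  [rel x y | [&& x \in S, y \in S & adj x y]].

Definition deg (S : {set T}) (u : T) : nat := #|[set y in S | adj u y]|.

Definition is_dist (S : {set T}) (x y : T) (n : nat) : Prop :=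
  (exists p : seq T, [/\ path (radj S) x p, last x p = y & size p = n]) /\
  (forall p : seq T, path (radj S) x p -> last x p = y -> n <= size p).

Variable v : T.

(** D[u] in the current tree S rooted at v: u and all its descendants *)
Definition desc (S : {set T}) (u : T) : {set T} :=
  if u == v then S
  else [set x in S | ~~ connect (radj (S :\ u)) v x].

Definition children (S : {set T}) (u : T) : {set T} :=
  [set w in desc S u | adj u w].

(** C^i(u): children w with |V(T_w)| = i mod 3 *)
Definition childrenmod (S : {set T}) (u : T) (i : nat) : {set T} :=
  [set w in children S u | #|desc S w| %% 3 == i].

Definition branch (S : {set T}) (u : T) : bool := (u \in S) && (3 <= deg S u).

Definition prune_step (S S' : {set T}) : Prop :=
  exists u, [/\ branch S u, u != v,
    (forall u' n n', branch S u' -> u' != v -> is_dist S v u n ->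
        is_dist S v u' n' -> n' <= n) &
    (if (1 <= #|childrenmod S u 2|) || (2 <= #|childrenmod S u 1|)
     then S' = S :\: desc S u
     else exists2 z, z \in children S u &
            [/\ #|childrenmod S u 1| = 1 -> z \in childrenmod S u 1 &
                S' = S :\: \bigcup_(w in children S u :\ z) desc S w])].

Inductive prune_reach (S : {set T}) : {set T} -> Prop :=
  | prune_refl : prune_reach S S
  | prune_more S1 S2 : prune_reach S S1 -> prune_step S1 S2 -> prune_reach S S2.

Definition is_pruning (Sbar : {set T}) : Prop :=
  prune_reach [set: T] Sbar /\
  (forall u, u \in Sbar -> u != v -> ~~ branch Sbar u).

End Defs.

(* Main.v *)
Require Import Defs.
From mathcomp Require Import all_boot zify.
Set Implicit Arguments. Unset Strict Implicit. Unset Printing Implicit Defensive.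

Section Tree.
Variables (T : finType) (adj : rel T) (v : T).
Hypothesis adj_sym : symmetric adj.
Hypothesis adj_irr : irreflexive adj.
Hypothesis conn : forall x y, connect adj x y.
Hypothesis acyc : ~ has_cycle adj.
Implicit Types (S F G H Z U : {set T}) (x y z u w a b : T).

Definition dpred (x : T) n := [exists t : n.-tuple T, path adj v t && (last v t == x)].

Lemma dpredP x n : reflect (exists p, [/\ path adj v p, last v p = x & size p = n]) (dpred x n).
Proof.
apply: (iffP existsP) => [[t /andP[Hp /eqP Hl]]|[p [Hp Hl Hs]]].
  by exists t; rewrite size_tuple.
have Hs' : size p == n by rewrite Hs.
by exists (Tuple Hs'); rewrite /= Hp Hl eqxx.
Qed.

Lemma dex x : exists n, dpred x n.
Proof.
have /connectP[p Hp Hl] := conn v x.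
by exists (size p); apply/dpredP; exists p.
Qed.

Definition d x := ex_minn (dex x).

Lemma d_spec x : dpred x (d x).
Proof. by rewrite /d; case: ex_minnP. Qed.
Lemma d_min x n : dpred x n -> d x <= n.
Proof. by rewrite /d; case: ex_minnP => m _ H /H. Qed.

Lemma d_v : d v = 0.
Proof. apply/eqP; rewrite -leqn0; apply: d_min; apply/dpredP; by exists [::]. Qed.

Lemma d0 x : d x = 0 -> x = v.
Proof. by move=> H; have := d_spec x; rewrite H => /dpredP[p [_ <- Hs]]; case: p Hs. Qed.

Lemma d_adj x y : adj x y -> d y <= (d x).+1.
Proof.
move=> Hxy; have /dpredP[p [Hp Hl Hs]] := d_spec x.
apply: d_min; apply/dpredP; exists (rcons p y); split.
- by rewrite rcons_path Hp Hl.
- by rewrite last_rcons.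
- by rewrite size_rcons Hs.
Qed.

Lemma d_par_ex x : x != v -> exists y, adj y x /\ (d y).+1 = d x.
Proof.
move=> Hx; have /dpredP[p [Hp Hl Hs]] := d_spec x.
case/lastP: p Hp Hl Hs => [|q z]; first by move=> _ /= Hl; rewrite Hl eqxx in Hx.
rewrite rcons_path last_rcons size_rcons => /andP[Hq Hz] Hzx Hs; subst z.
exists (last v q); split => //.
apply/eqP; rewrite eqn_leq -{1}Hs ltnS d_min /=; last by apply/dpredP; exists q.
by rewrite d_adj.
Qed.

Definition par x := if x == v then v else odflt v [pick y | adj y x && ((d y).+1 == d x)].

Lemma par_v : par v = v.
Proof. by rewrite /par eqxx. Qed.

Lemma par_spec x : x != v -> adj (par x) x /\ (d (par x)).+1 = d x.
Proof.
move=> Hx; have [y [Hyx Hd]] := d_par_ex Hx.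
rewrite /par (negbTE Hx); case: pickP => [z /andP[H1 /eqP H2]|/(_ y)] //=.
by rewrite Hyx Hd eqxx.
Qed.

Lemma par_adj x : x != v -> adj (par x) x.
Proof. by case/par_spec. Qed.

Lemma d_par x : d (par x) = (d x).-1.
Proof.
have [->|Hx] := eqVneq x v; first by rewrite par_v d_v.
by have [_ <-] := par_spec Hx.
Qed.

Lemma par_neq x : x != v -> par x != x.
Proof. by move=> Hx; apply/negP => /eqP E; have := par_adj Hx; rewrite E adj_irr. Qed.

Lemma d_iter i x : d (iter i par x) = d x - i.
Proof. by elim: i => [|i IH]; rewrite ?subn0 //= d_par IH subnS. Qed.

Lemma iter_v i x : d x <= i -> iter i par x = v.
Proof. by move=> H; apply: d0; rewrite d_iter; apply/eqP; rewrite subn_eq0. Qed.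

Definition pe := [rel a b | ((a != v) && (b == par a)) || ((b != v) && (a == par b))].

Lemma pe_sym : symmetric pe.
Proof. by move=> a b; rewrite /= orbC. Qed.

Lemma pe_adj a b : pe a b -> adj a b.
Proof.
case/orP => /andP[H /eqP ->]; last exact: par_adj.
by rewrite adj_sym par_adj.
Qed.

Lemma pe_conn a : connect pe a v.
Proof.
elim: {a}(d a) {-2}a (erefl (d a)) => [|n IH] a Ha; first by rewrite (d0 Ha).
have Hav : a != v by apply/eqP => E; rewrite E d_v in Ha.
apply: connect_trans (connect1 _) (IH (par a) _); first by rewrite /= Hav eqxx.
by rewrite d_par Ha.
Qed.

Lemma edge_par x y : adj x y -> par x = y \/ par y = x.
Proof.
move=> Hxy.
case: (eqVneq (par x) y) => [|Hx]; first by left.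
case: (eqVneq (par y) x) => [|Hy]; first by right.
exfalso; apply: acyc.
have Hc : connect pe x y.
  apply: connect_trans (pe_conn x) _.
  by rewrite (sym_connect_sym pe_sym) pe_conn.
case/connectP: Hc => p Hp Hl.
case: (shortenP Hp) Hl => p' Hp' Hu _ Hl.
have Hp'a : path adj x p' by apply: sub_path Hp'; apply: pe_adj.
exists (x :: p'); split => //; last first.
  by rewrite /= rcons_path Hp'a -Hl adj_sym.
case: p' Hp' Hu Hl Hp'a => [|a [|b q]] //=.
- by move=> _ _ Hl; rewrite -Hl adj_irr in Hxy.
- move=> /andP[/orP[] /andP[_ /eqP E] _] _ Ha _.
    by rewrite Ha E eqxx in Hx.
  by rewrite Ha E eqxx in Hy.
Qed.


Definition anc u x := [exists i : 'I_(d x).+1, iter i par x == u].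

Lemma ancP u x : reflect (exists i, iter i par x = u) (anc u x).
Proof.
apply: (iffP existsP) => [[i /eqP H]|[i H]]; first by exists i.
have [Hi|Hi] := leqP i (d x).
  by exists (Ordinal (Hi : i < (d x).+1)); rewrite /= H.
exists (Ordinal (ltnSn (d x))); rewrite /= -H (iter_v (leqnn _)) iter_v //.
exact: ltnW.
Qed.

Lemma anc_refl x : anc x x.
Proof. by apply/ancP; exists 0. Qed.

Lemma anc_trans u w y : anc u w -> anc w y -> anc u y.
Proof.
move=> /ancP[i Hi] /ancP[j Hj]; apply/ancP; exists (i + j).
by rewrite iterD Hj.
Qed.

Lemma anc_par x : anc (par x) x.
Proof. by apply/ancP; exists 1. Qed.

Lemma anc_v x : anc v x.
Proof. by apply/ancP; exists (d x); rewrite iter_v. Qed.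

Lemma anc_iter x y : anc x y -> iter (d y - d x) par y = x.
Proof.
case/ancP => i Hi.
have [Hle|Hlt] := leqP i (d y).
  by rewrite -Hi d_iter subKn.
have Hx : x = v by rewrite -Hi iter_v // ltnW.
by rewrite Hx d_v subn0 iter_v.
Qed.

Lemma anc_lt u x : anc u x -> u != x -> d u < d x.
Proof.
move=> /ancP[i Hi] Hux.
move: Hi; case: i => [|i] Hi; first by rewrite -Hi eqxx in Hux.
have [Hx|Hx] := eqVneq x v.
  by move: Hi; rewrite Hx iter_v ?d_v // => Hi; rewrite -Hi Hx eqxx in Hux.
rewrite -Hi d_iter; have : d x != 0 by apply/eqP => /d0 E; rewrite E eqxx in Hx.
by case: (d x) => // n _; rewrite subSS ltnS leq_subr.
Qed.

Lemma anc_le u x : anc u x -> d u <= d x.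
Proof.
move=> H; have [->|Hne] := eqVneq u x => //.
exact: ltnW (anc_lt H Hne).
Qed.

Lemma anc_step u x : anc u x -> u != x -> anc u (par x).
Proof.
move=> /ancP[[|i] Hi] Hux; first by rewrite -Hi eqxx in Hux.
by apply/ancP; exists i; rewrite -iterSr.
Qed.

Lemma anc_to_v u : anc u v -> u = v.
Proof. by move=> /ancP[i <-]; rewrite iter_v // d_v. Qed.

Lemma anc_same a b y : anc a y -> anc b y -> d a = d b -> a = b.
Proof. by move=> /anc_iter Ha /anc_iter Hb E; rewrite -Ha -Hb E. Qed.

Definition rooted (S : {set T}) := v \in S /\ forall x, x \in S -> par x \in S.

Lemma rooted_iter S i x : rooted S -> x \in S -> iter i par x \in S.
Proof. by move=> [_ H] Hx; elim: i => //= i IH; apply: H. Qed.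

Definition Dset (S : {set T}) u := [set x in S | anc u x].
Definition ch (S : {set T}) u := [set w in S | (w != v) && (par w == u)].

Lemma ch_par S u w : w \in ch S u -> par w = u.
Proof. by rewrite inE => /and3P[_ _ /eqP]. Qed.
Lemma ch_S S u w : w \in ch S u -> w \in S.
Proof. by rewrite inE => /andP[]. Qed.
Lemma ch_nv S u w : w \in ch S u -> w != v.
Proof. by rewrite inE => /and3P[]. Qed.
Lemma ch_adj S u w : w \in ch S u -> adj u w.
Proof. by move=> H; rewrite -(ch_par H) par_adj // (ch_nv H). Qed.
Lemma ch_d S u w : w \in ch S u -> d w = (d u).+1.
Proof. by move=> H; have [_ <-] := par_spec (ch_nv H); rewrite (ch_par H). Qed.
Lemma ch_neq S u w : w \in ch S u -> w != u.
Proof. by move=> H; apply/eqP => E; have := ch_d H; rewrite E; exact: n_Sn. Qed.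
Lemma ch_anc S u w : w \in ch S u -> anc u w.
Proof. by move=> H; rewrite -(ch_par H) anc_par. Qed.

Lemma D_mem S x : x \in S -> x \in Dset S x.
Proof. by move=> H; rewrite inE H anc_refl. Qed.
Lemma D_S S x y : y \in Dset S x -> y \in S.
Proof. by rewrite inE => /andP[]. Qed.
Lemma D_anc S x y : y \in Dset S x -> anc x y.
Proof. by rewrite inE => /andP[]. Qed.
Lemma D_sub S x w : w \in ch S x -> Dset S w \subset Dset S x.
Proof.
move=> Hw; apply/subsetP => y; rewrite !inE => /andP[-> H] /=.
exact: anc_trans (ch_anc Hw) H.
Qed.
Lemma D_mono S S' x : S' \subset S -> Dset S' x \subset Dset S x.
Proof. by move=> /subsetP H; apply/subsetP => y; rewrite !inE => /andP[/H -> ->]. Qed.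

Lemma Dsplit S x y : rooted S -> y \in Dset S x -> y != x ->
  exists2 w, w \in ch S x & y \in Dset S w.
Proof.
move=> HS; rewrite inE => /andP[Hy Hxy] Hne.
have Hlt := anc_lt Hxy (contra_neq esym Hne : x != y).
exists (iter (d y - d x).-1 par y); last first.
  rewrite inE Hy /=; apply/ancP; by exists (d y - d x).-1.
have Hdw : d (iter (d y - d x).-1 par y) = (d x).+1.
  rewrite d_iter; move: Hlt; set a := d x; set b := d y => Hab.
  lia.
rewrite inE rooted_iter //=; apply/andP; split.
  by apply/eqP => E; rewrite E d_v in Hdw.
rewrite -(iterS _ par) prednK ?subn_gt0 //.
by rewrite (anc_iter Hxy).
Qed.

Lemma D_disj S x w1 w2 : w1 \in ch S x -> w2 \in ch S x -> w1 != w2 ->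
  [disjoint Dset S w1 & Dset S w2].
Proof.
move=> H1 H2 Hne; apply/pred0P => y /=; apply/negP => /andP[/D_anc A1 /D_anc A2].
by rewrite (anc_same A1 A2) ?eqxx ?(ch_d H1) ?(ch_d H2) in Hne.
Qed.

Lemma nbr_cases S y z : z \in S -> adj y z -> z = par y \/ z \in ch S y.
Proof.
move=> Hz Hyz; case: (edge_par Hyz) => [->|H]; [by left|right].
rewrite inE Hz H eqxx andbT; apply/eqP => E.
by rewrite E par_v in H; rewrite -H E adj_irr in Hyz.
Qed.

Lemma pendant_D S x y z : y \in Dset S x -> y != x -> z \in S -> adj y z -> z \in Dset S x.
Proof.
move=> Hy Hne Hz Hyz; rewrite inE Hz /=.
case: (nbr_cases Hz Hyz) => [->|Hc]; first by apply: anc_step (D_anc Hy) _; rewrite eq_sym.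
exact: anc_trans (D_anc Hy) (ch_anc Hc).
Qed.

Lemma closed_D S x y : par y \in Dset S x -> anc x y.
Proof. by move=> /D_anc H; exact: anc_trans H (anc_par y). Qed.

Lemma v_notin_D S x : x != v -> v \notin Dset S x.
Proof. by move=> Hx; rewrite inE; apply/negP => /andP[_ /anc_to_v E]; rewrite E eqxx in Hx. Qed.

Lemma desc_eq S u : rooted S -> u \in S -> desc adj v S u = Dset S u.
Proof.
move=> HS Hu; rewrite /desc; case: eqP => [->|/eqP Huv].
  by apply/setP => x; rewrite inE; case: (boolP (x \in S)) => //= _; rewrite anc_v.
apply/setP => x; rewrite !inE; case: (boolP (x \in S)) => //= Hx.
set e := radj adj (S :\ u).
have esym : symmetric e.
  by move=> a b; rewrite /e /radj /= adj_sym; case: (a \in _); case: (b \in _).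
apply/idP/idP.
  apply: contraR => Hnot.
  have : forall n y, d y = n -> y \in S -> ~~ anc u y -> connect e y v.
    elim => [|n IH] y Hd Hy Ha; first by rewrite (d0 Hd).
    have Hyv : y != v by apply/eqP => E; rewrite E d_v in Hd.
    have Hpa : ~~ anc u (par y) by apply: contra Ha => H; exact: anc_trans H (anc_par y).
    apply: connect_trans (connect1 _) (IH _ _ _ Hpa).
    - rewrite /e /radj /= !inE Hy HS.2 // adj_sym par_adj // !andbT.
      apply/andP; split; apply/negP => /eqP E; [rewrite E anc_refl in Ha | rewrite E anc_refl in Hpa] => //.
    - by rewrite d_par Hd.
    - exact: HS.2.
  move=> /(_ (d x) x erefl Hx Hnot) H.
  by rewrite (sym_connect_sym esym) H.
move=> Hanc; apply/negP => Hc.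
have Hcl : closed e [pred a | ~~ anc u a].
  apply: intro_closed; first exact: sym_connect_sym.
  move=> a b; rewrite /e /radj /= !inE => /and3P[_ /andP[Hbu Hb] Hab] Ha.
  apply/negP => Hb'.
  case: (edge_par Hab) => E.
    by move/negP: Ha; apply; apply: anc_trans Hb' _; rewrite -E anc_par.
  by move/negP: Ha; apply; rewrite -E; apply: anc_step Hb' _; rewrite eq_sym.
have := closed_connect Hcl Hc; rewrite !inE Hanc /= => /negbFE /anc_to_v E.
by rewrite E eqxx in Huv.
Qed.


Lemma children_eq S u : rooted S -> u \in S -> children adj v S u = ch S u.
Proof.
move=> HS Hu; apply/setP => w; rewrite /children desc_eq // !inE.
apply/idP/idP => [/andP[/andP[Hw Ha] Hadj]|Hc].
  case: (edge_par Hadj) => E.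
    have Huv : u != v by apply/eqP => Euv; rewrite Euv par_v in E; rewrite -E Euv adj_irr in Hadj.
    have := anc_le Ha; have [_ <-] := par_spec Huv; rewrite E ltnn //.
  rewrite Hw E eqxx andbT /=; apply/eqP => Ewv.
  by rewrite Ewv par_v in E; rewrite -E Ewv adj_irr in Hadj.
have Hc' : w \in ch S u by rewrite inE.
by rewrite (ch_S Hc') (ch_anc Hc') (ch_adj Hc').
Qed.

Lemma childrenmod_eq S u i : rooted S -> u \in S ->
  childrenmod adj v S u i = [set w in ch S u | #|Dset S w| %% 3 == i].
Proof.
move=> HS Hu; apply/setP => w; rewrite /childrenmod children_eq // in_set [RHS]in_set.
case: (boolP (w \in ch S u)) => //= Hw.
by rewrite desc_eq // (ch_S Hw).
Qed.

Lemma is_dist_d S x : rooted S -> x \in S -> is_dist adj S v x (d x).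
Proof.
move=> HS Hx; split; last first.
  move=> p Hp Hl; apply: d_min; apply/dpredP; exists p; split => //.
  by apply: sub_path Hp => a b; rewrite /radj /= => /and3P[].
elim: {x}(d x) {-2}x (erefl (d x)) Hx => [|n IH] x Hd Hx.
  by exists [::]; split; rewrite ?Hd ?(d0 Hd).
have Hxv : x != v by apply/eqP => E; rewrite E d_v in Hd.
have Hdp : d (par x) = n by rewrite d_par Hd.
have [p [Hp Hl Hs]] := IH (par x) Hdp (HS.2 _ Hx).
exists (rcons p x); rewrite rcons_path last_rcons size_rcons Hp Hl Hs d_par Hd; split => //.
by rewrite /radj /= HS.2 // Hx par_adj.
Qed.

Lemma nbrs_ch S y : ch S y \subset [set z in S | adj y z].
Proof. by apply/subsetP => w Hw; rewrite inE (ch_S Hw) (ch_adj Hw). Qed.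

Lemma nonbranch_ch S y : rooted S -> y \in S -> y != v -> ~~ branch adj S y -> #|ch S y| <= 1.
Proof.
move=> HS Hy Hyv; rewrite /branch Hy /= -ltnNge ltnS => Hdeg.
have Hp : par y \notin ch S y.
  apply/negP => /ch_d; have [_ <-] := par_spec Hyv; lia.
have : #|par y |: ch S y| <= 2.
  apply: leq_trans Hdeg; apply: subset_leq_card; rewrite subUset nbrs_ch andbT sub1set.
  by rewrite inE HS.2 // adj_sym par_adj.
by rewrite cardsU1 Hp.
Qed.

Lemma rooted_diff S (U : {set T}) : rooted S -> v \notin U -> (forall x, x \in S -> par x \in U -> x \in U) ->
  rooted (S :\: U).
Proof.
move=> [Hv Hp] HvU Hcl; split; first by rewrite inE HvU Hv.
move=> x; rewrite !inE => /andP[HxU Hx]; rewrite Hp // andbT.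
by apply: contra HxU; apply: Hcl.
Qed.

Definition MxP S (P : pred {set T}) :=
  \max_(F : {set T} | (F \subset S) && dissociation adj F && P F) #|F|.
Definition In S := MxP S (fun F => v \in F).
Definition Out S := MxP S (fun F => v \notin F).
Definition mx S := MxP S xpredT.
Definition type0 (Z : {set T}) z := mx Z <= MxP Z (fun F => z \notin F).
Definition pendant S (Z : {set T}) z := forall x y, x \in Z -> x != z -> y \in S -> adj x y -> y \in Z.

Lemma MxP_ge S (P : pred {set T}) (F : {set T}) : F \subset S -> dissociation adj F -> P F -> #|F| <= MxP S P.
Proof. by move=> H1 H2 H3; apply: (leq_bigmax_cond F); rewrite H1 H2 H3. Qed.

Lemma MxP_le S (P : pred {set T}) n :
  (forall F : {set T}, F \subset S -> dissociation adj F -> P F -> #|F| <= n) -> MxP S P <= n.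
Proof. by move=> H; apply/bigmax_leqP => F /andP[/andP[H1 H2] H3]; apply: H. Qed.

Lemma MxP_wit S (P : pred {set T}) (G : {set T}) : G \subset S -> dissociation adj G -> P G ->
  exists F, [/\ F \subset S, dissociation adj F, P F & #|F| = MxP S P].
Proof.
move=> H1 H2 H3.
have HG : ((G \subset S) && dissociation adj G && P G) by rewrite H1 H2 H3.
rewrite /MxP (bigmax_eq_arg G HG).
case: arg_maxnP => // F /andP[/andP[? ?] ?] _; by exists F.
Qed.

Lemma dissP (F : {set T}) : reflect (forall x, x \in F -> #|[set y in F | adj x y]| <= 1) (dissociation adj F).
Proof. exact: (iffP forall_inP). Qed.

Lemma diss_sub (F G : {set T}) : F \subset G -> dissociation adj G -> dissociation adj F.
Proof.
move=> /subsetP sFG /dissP H; apply/dissP => x Hx.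
apply: leq_trans (H x (sFG _ Hx)); apply: subset_leq_card.
by apply/subsetP => y; rewrite !inE => /andP[/sFG -> ->].
Qed.

Lemma diss_union (G H : {set T}) : dissociation adj G -> dissociation adj H ->
  (forall x y, x \in G -> y \in H -> ~~ adj x y) -> dissociation adj (G :|: H).
Proof.
move=> /dissP dG /dissP dH Hno; apply/dissP => x; rewrite inE => /orP[Hx|Hx].
  have -> : [set y in G :|: H | adj x y] = [set y in G | adj x y]; last exact: dG.
  apply/setP => y; rewrite !inE; case: (boolP (y \in H)) => Hy; last by rewrite orbF.
  by rewrite (negbTE (Hno _ _ Hx Hy)) !andbF.
have -> : [set y in G :|: H | adj x y] = [set y in H | adj x y]; last exact: dH.
apply/setP => y; rewrite !inE; case: (boolP (y \in G)) => Hy //=.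
by rewrite adj_sym (negbTE (Hno _ _ Hy Hx)) andbF.
Qed.

Lemma diss0 : dissociation adj set0.
Proof. by apply/dissP => x; rewrite inE. Qed.

Lemma diss1 x : dissociation adj [set x].
Proof.
apply/dissP => y; rewrite inE => /eqP ->.
by apply: leq_trans (subset_leq_card (_ : _ \subset [set x])) _;
  [apply/subsetP => z; rewrite !inE => /andP[] | rewrite cards1].
Qed.

Lemma removal S (Z : {set T}) z (P : pred {set T}) :
  Z \subset S -> pendant S Z z -> type0 Z z -> (forall F, P F = P (F :\: Z)) ->
  (exists G, [/\ G \subset S :\: Z, dissociation adj G & P G]) ->
  MxP S P = MxP (S :\: Z) P + mx Z.
Proof.
move=> sZS Hpe Ht HP [G0 [HG0 dG0 PG0]].
apply/eqP; rewrite eqn_leq; apply/andP; split.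
  apply: MxP_le => F sFS dF PF.
  rewrite -(cardsID Z F) addnC leq_add //.
    apply: MxP_ge; [by rewrite setSD | exact: diss_sub (subsetDl _ _) dF | by rewrite -HP].
  apply: MxP_ge => //; [exact: subsetIr | exact: diss_sub (subsetIl _ _) dF].
have [G [sG dG PG <-]] := MxP_wit HG0 dG0 PG0.
have [H [sH dH zH EH]] := MxP_wit (P := fun F => z \notin F) (sub0set Z) diss0 (negbT (in_set0 z)).
have HGZ : [disjoint G & Z].
  by apply/pred0P => x /=; apply/negP => /andP[/(subsetP sG)]; rewrite inE => /andP[/negP].
apply: leq_trans (MxP_ge (F := G :|: H) _ _ _).
- rewrite cardsU.
  have -> : G :&: H = set0.
    apply/setP => x; rewrite !inE; apply/negP => /andP[Hx /(subsetP sH) Hz].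
    by move/pred0P: HGZ => /(_ x) /=; rewrite Hx Hz.
  by rewrite cards0 subn0 leq_add2l EH.
- by rewrite subUset (subset_trans sG) ?subsetDl // (subset_trans sH).
- apply: diss_union dG dH _ => x y Hx Hy; apply/negP => Hxy.
  have Hyz : y != z by apply/eqP => E; rewrite -E Hy in zH.
  have HxS : x \in S by move/(subsetP sG): Hx; rewrite inE => /andP[].
  have := Hpe y x (subsetP sH _ Hy) Hyz HxS; rewrite adj_sym Hxy => /(_ isT) HxZ.
  by move/pred0P: HGZ => /(_ x) /=; rewrite Hx HxZ.
- rewrite HP.
  have -> : (G :|: H) :\: Z = G.
    apply/setP => x; rewrite !inE; case: (boolP (x \in G)) => Hx /=.
      by move/pred0P: HGZ => /(_ x) /=; rewrite Hx /= => ->.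
    by case: (boolP (x \in H)) => Hh; rewrite ?(subsetP sH _ Hh) ?andbF.
  exact: PG.
Qed.

Lemma type0_crit (Z : {set T}) z : z \in Z -> dissociation adj (Z :\ z) -> ~~ dissociation adj Z -> type0 Z z.
Proof.
move=> Hz dZ ndZ; rewrite /type0.
apply: leq_trans (_ : #|Z :\ z| <= _); last first.
  by apply: MxP_ge => //; [exact: subsetDl | rewrite !inE eqxx].
apply: MxP_le => F sFZ dF _.
have : #|F| < #|Z|.
  apply: proper_card; rewrite properEneq sFZ andbT.
  by apply/eqP => E; rewrite -E dF in ndZ.
by rewrite (cardsD1 z Z) Hz add1n ltnS.
Qed.

Lemma all_iff : in_all_max adj v <-> Out [set: T] < In [set: T].
Proof.
have wIn : exists F, [/\ F \subset [set: T], dissociation adj F & v \in F] by exists [set v]; rewrite subsetT diss1 set11.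
have [Fi [_ dFi vFi EFi]] := MxP_wit (P := fun F => v \in F) (subsetT [set v]) (diss1 v) (set11 v).
have [Fo [_ dFo vFo EFo]] := MxP_wit (P := fun F => v \notin F) (sub0set [set: T]) diss0 (negbT (in_set0 v)).
split => [Hall|Hlt F [dF HF]].
  rewrite ltnNge; apply/negP => Hle.
  have : v \in Fo; last by rewrite (negbTE vFo).
  apply: Hall; split => // F' dF'.
  case: (boolP (v \in F')) => H.
    by rewrite /Out in EFo; rewrite EFo; apply: leq_trans Hle; apply: MxP_ge; rewrite ?subsetT.
  by rewrite /Out in EFo; rewrite EFo; apply: MxP_ge; rewrite ?subsetT.
apply/negPn/negP => HvF.
have := HF _ dFi; rewrite /In in EFi; rewrite EFi => H1.
have : #|F| <= Out [set: T] by apply: MxP_ge; rewrite ?subsetT.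
by move=> H2; have := leq_trans (leq_trans Hlt H1) H2; rewrite ltnn.
Qed.

Lemma no_iff : in_no_max adj v <-> In [set: T] < Out [set: T].
Proof.
have [Fi [_ dFi vFi EFi]] := MxP_wit (P := fun F => v \in F) (subsetT [set v]) (diss1 v) (set11 v).
have [Fo [_ dFo vFo EFo]] := MxP_wit (P := fun F => v \notin F) (sub0set [set: T]) diss0 (negbT (in_set0 v)).
split => [Hno|Hlt F [dF HF]].
  rewrite ltnNge; apply/negP => Hle.
  have : v \notin Fi; last by rewrite vFi.
  apply: Hno; split => // F' dF'.
  case: (boolP (v \in F')) => H.
    by rewrite /In in EFi; rewrite EFi; apply: MxP_ge; rewrite ?subsetT.
  by rewrite /In in EFi; rewrite EFi; apply: leq_trans Hle; apply: MxP_ge; rewrite ?subsetT.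
apply/negP => HvF.
have := HF _ dFo; rewrite /Out in EFo; rewrite EFo => H1.
have : #|F| <= In [set: T] by apply: MxP_ge; rewrite ?subsetT.
by move=> H2; have := leq_trans (leq_trans Hlt H1) H2; rewrite ltnn.
Qed.


Definition chain S x := forall y, y \in Dset S x -> #|ch S y| <= 1.
Definition next S x := odflt x [pick c in ch S x].

Lemma D_subD S x y : y \in Dset S x -> Dset S y \subset Dset S x.
Proof. move=> Hy; apply/subsetP => z; rewrite !inE => /andP[-> H]; exact: anc_trans (D_anc Hy) H. Qed.

Lemma chain_sub S x y : chain S x -> y \in Dset S x -> chain S y.
Proof. by move=> H Hy z Hz; apply: H; exact: (subsetP (D_subD Hy)). Qed.

Lemma D_leaf S x : rooted S -> x \in S -> ch S x = set0 -> Dset S x = [set x].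
Proof.
move=> HS Hx H0; apply/setP => y; rewrite inE; apply/idP/idP => [Hy|/eqP->]; last exact: D_mem.
case: (eqVneq y x) => // Hne; have [w Hw _] := Dsplit HS Hy Hne; by rewrite H0 inE in Hw.
Qed.

Lemma D_one S x c : rooted S -> x \in S -> ch S x = [set c] ->
  Dset S x = x |: Dset S c /\ x \notin Dset S c.
Proof.
move=> HS Hx Hc.
have Hcc : c \in ch S x by rewrite Hc set11.
split.
  apply/setP => y; rewrite in_setU1; apply/idP/idP => [Hy|/orP[/eqP->|Hy]].
  - case: (eqVneq y x) => //= Hne; have [w Hw Hyw] := Dsplit HS Hy Hne.
    by move: Hw; rewrite Hc inE => /eqP <-.
  - exact: D_mem.
  - exact: (subsetP (D_sub Hcc)).
by apply/negP => /D_anc /anc_le; rewrite (ch_d Hcc) ltnn.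
Qed.

Lemma D_one_card S x c : rooted S -> x \in S -> ch S x = [set c] -> #|Dset S x| = (#|Dset S c|).+1.
Proof. by move=> HS Hx Hc; have [-> Hn] := D_one HS Hx Hc; rewrite cardsU1 Hn. Qed.

Lemma chain_leaf S x : x \in S -> #|Dset S x| = 1 -> ch S x = set0.
Proof.
move=> Hx H1; apply/setP => c; rewrite in_set0; apply/negP => Hc.
have : [set x; c] \subset Dset S x.
  by rewrite subUset !sub1set D_mem // (subsetP (D_sub Hc)) // D_mem // (ch_S Hc).
move/subset_leq_card; rewrite H1 cards2 ltnS leqn0 eqb0 negbK => /eqP E.
by move: (ch_neq Hc); rewrite E eqxx.
Qed.

Lemma chain_next S x : rooted S -> x \in S -> chain S x -> 1 < #|Dset S x| ->
  ch S x = [set next S x].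
Proof.
move=> HS Hx Hch H2.
have H1 : #|ch S x| <= 1 by apply: Hch; exact: D_mem.
have H0 : #|ch S x| != 0.
  apply/eqP => /eqP; rewrite cards_eq0 => /eqP H0.
  by rewrite (D_leaf HS Hx H0) cards1 in H2.
have /cards1P[c Hc] : #|ch S x| == 1 by rewrite eqn_leq H1 lt0n.
rewrite /next Hc; case: pickP => [c' | /(_ c)]; last by rewrite inE eqxx.
by rewrite inE => /eqP ->.
Qed.

Lemma chain_iter S x k : rooted S -> x \in S -> chain S x -> k < #|Dset S x| ->
  [/\ iter k (next S) x \in Dset S x, chain S (iter k (next S) x) &
      #|Dset S (iter k (next S) x)| = #|Dset S x| - k].
Proof.
move=> HS Hx Hch; elim: k => [|k IH] Hk /=; first by rewrite subn0 D_mem.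
have [Hy Hchy Hsz] := IH (ltnW Hk).
move: Hy Hchy Hsz; set y := iter k (next S) x => Hy Hchy Hsz.
have HyS : y \in S := D_S Hy.
have H2 : 1 < #|Dset S y| by rewrite Hsz; lia.
have Hc := chain_next HS HyS Hchy H2.
have Hcc : next S y \in ch S y by rewrite Hc set11.
have Hin : next S y \in Dset S y := subsetP (D_sub Hcc) _ (D_mem (ch_S Hcc)).
split.
- exact: (subsetP (D_subD Hy)) _ Hin.
- exact: chain_sub Hchy Hin.
- by move: (D_one_card HS HyS Hc); rewrite Hsz; lia.
Qed.

Lemma diss_small F : #|F| <= 2 -> dissociation adj F.
Proof.
move=> H; apply/dissP => x Hx.
have : [set y in F | adj x y] \subset F :\ x.
  apply/subsetP => y; rewrite !inE => /andP[Hy Hxy]; rewrite Hy andbT.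
  by apply/eqP => E; rewrite E adj_irr in Hxy.
move/subset_leq_card => H'; move: H; rewrite (cardsD1 x F) Hx /=; lia.
Qed.

Lemma not_diss F a b1 b2 : a \in F -> b1 \in F -> b2 \in F -> b1 != b2 ->
  adj a b1 -> adj a b2 -> ~~ dissociation adj F.
Proof.
move=> Ha H1 H2 Hne A1 A2; apply/negP => /dissP /(_ a Ha).
have : [set b1; b2] \subset [set y in F | adj a y] by rewrite subUset !sub1set !inE H1 H2 A1 A2.
move/subset_leq_card; rewrite cards2 Hne => H3 H4; have := leq_trans H3 H4; by [].
Qed.

Lemma P3_type0 x c g S : c \in ch S x -> g \in ch S c -> type0 (x |: (c |: [set g])) x.
Proof.
move=> Hc Hg.
have Hxc : x != c by rewrite eq_sym (ch_neq Hc).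
have Hcg : c != g by rewrite eq_sym (ch_neq Hg).
apply: type0_crit.
- by rewrite !inE eqxx.
- have sub2 : (x |: (c |: [set g])) :\ x \subset [set c; g].
    by apply/subsetP => y; rewrite !inE => /andP[/negbTE -> /=].
  apply: diss_small; apply: leq_trans (subset_leq_card sub2) _.
  by rewrite cards2 ltnS leq_b1.
- apply: (@not_diss _ c x g); rewrite ?inE ?eqxx ?orbT //.
  + apply/eqP => E; have := ch_d Hg; rewrite (ch_d Hc) -E; lia.
  + by rewrite adj_sym (ch_adj Hc).
  + exact: ch_adj Hg.
Qed.

Lemma pendant_mono S S' Z z : S' \subset S -> pendant S Z z -> pendant S' Z z.
Proof. by move=> /subsetP H Hp x y Hx Hxz Hy; apply: Hp => //; apply: H. Qed.

Lemma chain0 S k : rooted S -> forall x, x \in S -> chain S x -> #|Dset S x| = 3 * k.+1 ->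
  type0 (Dset S x) x.
Proof.
move=> HS; elim: k => [|k IH] x Hx Hch Hn.
all: have H2x : 1 < #|Dset S x| by rewrite Hn; lia.
all: have Hcx := chain_next HS Hx Hch H2x.
all: set c := next S x in Hcx.
all: have Hcc : c \in ch S x by rewrite Hcx set11.
all: have HcS := ch_S Hcc.
all: have [Ex Hxc] := D_one HS Hx Hcx.
all: have Hchc : chain S c by apply: chain_sub Hch _; rewrite Ex; apply: setU1r; apply: D_mem.
all: have Hnc : #|Dset S x| = (#|Dset S c|).+1 := D_one_card HS Hx Hcx.
all: have H2c : 1 < #|Dset S c| by lia.
all: have Hgc := chain_next HS HcS Hchc H2c.
all: set g := next S c in Hgc.
all: have Hgg : g \in ch S c by rewrite Hgc set11.
all: have HgS := ch_S Hgg.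
all: have [Ec Hcg] := D_one HS HcS Hgc.
all: have Hng : #|Dset S c| = (#|Dset S g|).+1 := D_one_card HS HcS Hgc.
- have Eg : Dset S g = [set g] by apply: D_leaf => //; apply: chain_leaf => //; lia.
  by rewrite Ex Ec Eg; apply: P3_type0 Hcc Hgg.
- have Hchg : chain S g by apply: chain_sub Hchc _; rewrite Ec; apply: setU1r; apply: D_mem.
  have H2g : 1 < #|Dset S g| by lia.
  have Hhg := chain_next HS HgS Hchg H2g.
  set h := next S g in Hhg.
  have Hhh : h \in ch S g by rewrite Hhg set11.
  have HhS := ch_S Hhh.
  have [Eg Hgh] := D_one HS HgS Hhg.
  have Hnh : #|Dset S h| = 3 * k.+1 by move: (D_one_card HS HgS Hhg); lia.
  have Hchh : chain S h by apply: chain_sub Hchg _; rewrite Eg; apply: setU1r; apply: D_mem.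
  have IHh := IH h HhS Hchh Hnh.
  have HxDh : x \notin Dset S h by apply: contra Hxc; apply/subsetP; rewrite Ec Eg subsetU // subsetU ?subxx ?orbT.
  have HcDh : c \notin Dset S h by apply: contra Hcg; apply/subsetP; rewrite Eg subsetU // subxx orbT.
  have sub : Dset S h \subset Dset S x by rewrite Ex Ec Eg !subsetU // ?subxx ?orbT.
  have EY : Dset S x :\: Dset S h = x |: (c |: [set g]).
    apply/setP => y; rewrite Ex Ec Eg in_setD !in_setU1 in_set1.
    case: (eqVneq y x) => [->|]; first by rewrite (negbTE HxDh).
    case: (eqVneq y c) => [->|]; first by rewrite (negbTE HcDh).
    case: (eqVneq y g) => [->|]; first by rewrite (negbTE Hgh).
    by move=> /= _ _ _; case: (y \in Dset S h).
  have Hpe : pendant (Dset S x) (Dset S h) h.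
    apply: pendant_mono (pendant_D (S:=S) (x:=h)) => //.
    by apply/subsetP => y /D_S.
  have R1 := removal (P := xpredT) sub Hpe IHh (fun F => erefl) (ex_intro _ set0 (And3 (sub0set _) diss0 isT)).
  have R2 := removal (P := fun F => x \notin F) sub Hpe IHh _ (ex_intro _ set0 (And3 (sub0set _) diss0 (negbT (in_set0 x)))).
  rewrite /type0 {1}/mx R1 R2; last first.
    by move=> F; rewrite inE HxDh.
  rewrite EY leq_add2r; exact: P3_type0 Hcc Hgg.
Qed.


(* relation preserved by pruning *)
Definition relIO S S' := exists c, In S = In S' + c /\ Out S = Out S' + c.

Lemma rel_refl S : relIO S S.
Proof. by exists 0; rewrite !addn0. Qed.

Lemma rel_trans S1 S2 S3 : relIO S1 S2 -> relIO S2 S3 -> relIO S1 S3.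
Proof. by move=> [a [H1 H2]] [b [H3 H4]]; exists (b + a); rewrite H1 H2 H3 H4 !addnA. Qed.

Lemma rel_one S Z z : v \in S -> Z \subset S -> pendant S Z z -> type0 Z z -> v \notin Z ->
  relIO S (S :\: Z).
Proof.
move=> Hv sZ Hp Ht HvZ; exists (mx Z).
have HPin : forall F, (v \in F) = (v \in F :\: Z) by move=> F; rewrite in_setD HvZ.
have HPout : forall F, (v \notin F) = (v \notin F :\: Z) by move=> F; rewrite in_setD HvZ.
split.
- apply: (removal (P := fun F => v \in F) sZ Hp Ht HPin).
  by exists [set v]; rewrite sub1set in_setD HvZ Hv diss1 set11.
- apply: (removal (P := fun F => v \notin F) sZ Hp Ht HPout).
  by exists set0; rewrite sub0set diss0 in_set0.
Qed.

Lemma bigcup_seqP (s : seq T) (R : T -> {set T}) y :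
  reflect (exists2 w, w \in s & y \in R w) (y \in \bigcup_(w <- s) R w).
Proof.
elim: s => [|w s IH]; first by rewrite big_nil inE; constructor => [[]].
rewrite big_cons in_setU; apply: (iffP orP) => [[H|/IH [w' H1 H2]]|[w' ]].
- by exists w; rewrite ?mem_head.
- by exists w'; rewrite // inE H1 orbT.
- rewrite inE => /orP[/eqP -> H|H1 H2]; [by left | right; apply/IH; by exists w'].
Qed.

Lemma rel_seq S (s : seq T) (R : T -> {set T}) (r : T -> T) :
  v \in S -> uniq s ->
  (forall w, w \in s -> [/\ R w \subset S, pendant S (R w) (r w), type0 (R w) (r w) & v \notin R w]) ->
  (forall w1 w2, w1 \in s -> w2 \in s -> w1 != w2 -> [disjoint R w1 & R w2]) ->
  relIO S (S :\: \bigcup_(w <- s) R w).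
Proof.
move=> Hv; elim: s => [|w s IH] /= Hu Hs Hd.
  by rewrite big_nil setD0; exact: rel_refl.
case/andP: Hu => Hws Hu.
have sub : {subset s <= w :: s} by move=> a Ha; rewrite inE Ha orbT.
have IH' := IH Hu (fun w' Hw' => Hs w' (sub _ Hw')) (fun a b Ha Hb => Hd a b (sub _ Ha) (sub _ Hb)).
rewrite big_cons setUC -setDDl.
apply: rel_trans IH' _.
have [H1 H2 H3 H4] := Hs w (mem_head _ _).
apply: rel_one H3 H4.
- rewrite in_setD Hv andbT; apply/negP => /bigcup_seqP [w' Hw' Hvw'].
  by have [_ _ _ /negP] := Hs w' (sub _ Hw').
- apply/subsetP => y Hy; rewrite in_setD (subsetP H1 _ Hy) andbT.
  apply/negP => /bigcup_seqP [w' Hw' Hy'].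
  have Hne : w != w' by apply/eqP => E; rewrite E Hw' in Hws.
  by move/pred0P: (Hd w w' (mem_head _ _) (sub _ Hw') Hne) => /(_ y) /=; rewrite Hy Hy'.
- exact: pendant_mono (subsetDl _ _) H2.
Qed.

Definition Rred S w := if #|Dset S w| %% 3 == 0 then Dset S w
  else if #|Dset S w| < 3 then set0 else Dset S (iter (#|Dset S w| %% 3) (next S) w).
Definition rred S w := if #|Dset S w| %% 3 == 0 then w else iter (#|Dset S w| %% 3) (next S) w.

Lemma type0_set0 z : type0 set0 z.
Proof.
rewrite /type0; apply: leq_trans (_ : mx set0 <= 0) _ => //.
by apply: MxP_le => F; rewrite subset0 => /eqP ->; rewrite cards0.
Qed.

Lemma D_closed S a y : y \in S -> par y \in Dset S a -> y \in Dset S a.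
Proof. by move=> Hy H; rewrite inE Hy (closed_D H). Qed.

Lemma Rred_props S x w : rooted S -> w \in ch S x -> chain S w ->
  [/\ Rred S w \subset Dset S w, pendant S (Rred S w) (rred S w), type0 (Rred S w) (rred S w),
      (w \in Rred S w) = (#|Dset S w| %% 3 == 0) &
      #|Dset S w :\: Rred S w| = #|Dset S w| %% 3 /\
      forall y, y \in S -> par y \in Rred S w -> y \in Rred S w].
Proof.
move=> HS Hw Hch; have HwS := ch_S Hw.
have Hn1 : 0 < #|Dset S w| by apply/card_gt0P; exists w; exact: D_mem.
rewrite /Rred /rred; case: (eqVneq (#|Dset S w| %% 3) 0) => H0 /=.
  split => //.
  - move=> a b Ha Hab Hb Hadj; exact: pendant_D Ha Hab Hb Hadj.
  - apply: (chain0 (k := (#|Dset S w| %/ 3).-1) HS HwS Hch).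
    move: H0 Hn1; set n := #|Dset S w|; lia.
  - exact: D_mem.
  - split; first by rewrite setDv cards0.
    move=> y; exact: D_closed.
case: ifPn => Hlt.
  split => //.
  - exact: sub0set.
  - by move=> a b; rewrite inE.
  - exact: type0_set0.
  - by rewrite inE.
  - split; first by rewrite setD0 modn_small.
    by move=> y _; rewrite inE.
set j := #|Dset S w| %% 3.
have Hj : j < #|Dset S w| by rewrite /j; move: Hlt; set n := #|Dset S w|; lia.
have [Hy Hchy Hsz] := chain_iter HS HwS Hch Hj.
set y := iter j (next S) w in Hy Hchy Hsz *.
have HyS := D_S Hy.
split.
- exact: D_subD Hy.
- move=> a b Ha Hab Hb Hadj; exact: pendant_D Ha Hab Hb Hadj.
- apply: (chain0 (k := (#|Dset S y| %/ 3).-1) HS HyS Hchy).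
  rewrite Hsz /j; move: H0 Hlt; set n := #|Dset S w|; lia.
- apply/negbTE/negP => Hwy.
  have Ey : y = w by apply: anc_same (D_anc Hwy) (anc_refl w) _; apply/eqP; rewrite eqn_leq !anc_le // ?(D_anc Hy) ?(D_anc Hwy).
  move: Hsz; rewrite Ey /j; move: H0 Hlt; set n := #|Dset S w|; lia.
- split; first by rewrite cardsD (setIidPr (D_subD Hy)) Hsz /j; move: Hlt; set n := #|Dset S w|; lia.
  move=> z; exact: D_closed.
Qed.


Definition Sred S x := S :\: \bigcup_(w <- enum (ch S x)) Rred S w.

Lemma ch_mono S S' y : S' \subset S -> ch S' y \subset ch S y.
Proof. by move=> /subsetP H; apply/subsetP => w; rewrite !inE => /andP[/H -> ->]. Qed.

Lemma red_props S x : rooted S -> x \in S -> (forall w, w \in ch S x -> chain S w) ->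
  [/\ relIO S (Sred S x), rooted (Sred S x), x \in Sred S x,
      (forall w, (w \in ch (Sred S x) x) = (w \in ch S x) && (#|Dset S w| %% 3 != 0)) &
      (forall w, w \in ch (Sred S x) x -> chain (Sred S x) w /\ #|Dset (Sred S x) w| = #|Dset S w| %% 3)
      /\ Sred S x :\: Dset (Sred S x) x = S :\: Dset S x].
Proof.
move=> HS Hx Hch.
rewrite /Sred; set U := \bigcup_(w <- enum (ch S x)) Rred S w.
have HU y : reflect (exists2 w, w \in ch S x & y \in Rred S w) (y \in U).
  apply: (iffP (bigcup_seqP _ _ _)) => [[w Hw Hy]|[w Hw Hy]]; exists w => //; by rewrite ?mem_enum in Hw *.
have Pr w (Hw : w \in ch S x) := Rred_props HS Hw (Hch w Hw).
have Disj w1 w2 y : w1 \in ch S x -> w2 \in ch S x -> y \in Dset S w1 -> y \in Dset S w2 -> w1 = w2.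
  move=> H1 H2 Y1 Y2; apply/eqP; apply/negPn/negP => Hne.
  by move/pred0P: (D_disj H1 H2 Hne) => /(_ y) /=; rewrite Y1 Y2.
have RinD w y : w \in ch S x -> y \in Rred S w -> y \in Dset S w.
  by move=> Hw Hy; have [H1 _ _ _ _] := Pr w Hw; exact: subsetP H1 _ Hy.
have HvU : v \notin U.
  apply/negP => /HU [w Hw /(RinD _ _ Hw)]; apply/negP; apply: v_notin_D; exact: ch_nv Hw.
have HxU : x \notin U.
  apply/negP => /HU [w Hw /(RinD _ _ Hw) /D_anc /anc_le]; by rewrite (ch_d Hw) ltnn.
have UinR w y : w \in ch S x -> y \in Dset S w -> (y \in U) = (y \in Rred S w).
  move=> Hw Hy; apply/idP/idP => [/HU [w' Hw' Hy']|Hy']; last by apply/HU; exists w.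
  by rewrite (Disj _ _ _ Hw Hw' Hy (RinD _ _ Hw' Hy')).
have Hchx w : (w \in ch (S :\: U) x) = (w \in ch S x) && (#|Dset S w| %% 3 != 0).
  case: (boolP (w \in ch S x)) => Hw /=; last first.
    by apply/negP => /(subsetP (ch_mono x (subsetDl S U))); rewrite (negbTE Hw).
  have [_ _ _ Hmem _] := Pr w Hw.
  rewrite -Hmem -(UinR _ _ Hw (D_mem (ch_S Hw))).
  by move: Hw; rewrite !inE => /and3P[-> -> ->]; rewrite !andbT.
split.
- apply: (rel_seq (r := rred S) HS.1 (enum_uniq _)) => [w|w1 w2].
    rewrite mem_enum => Hw; have [H1 H2 H3 _ _] := Pr w Hw; split => //.
    + by apply: subset_trans H1 _; apply/subsetP => y /D_S.
    + apply/negP => /(subsetP H1); apply/negP; apply: v_notin_D; exact: ch_nv Hw.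
  rewrite !mem_enum => H1 H2 Hne; apply/pred0P => y /=; apply/negP => /andP[Y1 Y2].
  by move: Hne; rewrite (Disj _ _ _ H1 H2 (RinD _ _ H1 Y1) (RinD _ _ H2 Y2)) eqxx.
- apply: rooted_diff HS HvU _ => y Hy /HU [w Hw Hpy]; apply/HU; exists w => //.
  by have [_ _ _ _ [_ Hcl]] := Pr w Hw; apply: Hcl.
- by rewrite in_setD HxU.
- exact: Hchx.
split.
  move=> w; rewrite Hchx => /andP[Hw Hn]; have [_ _ _ _ [Hcard _]] := Pr w Hw.
  have ED : Dset (S :\: U) w = Dset S w :\: Rred S w.
    apply/setP => y; rewrite !inE; case: (boolP (anc w y)) => Ha; rewrite ?andbF //= !andbT.
    case: (boolP (y \in S)) => Hy; rewrite ?andbF //= andbT.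
    by rewrite andbT (UinR _ _ Hw) // inE Hy Ha.
  rewrite ED Hcard; split => // y Hy.
  have HyD : y \in Dset S w by apply: (subsetP (D_mono w (subsetDl S U))).
  apply: leq_trans (Hch w Hw y HyD); apply: subset_leq_card; apply: ch_mono; exact: subsetDl.
apply/setP => y; rewrite !inE.
case: (boolP (anc x y)) => Ha; first by case: (y \in U); case: (y \in S).
have -> : (y \in U) = false.
  apply/negP => /HU [w Hw /(RinD _ _ Hw) /D_anc Hwy].
  by rewrite (anc_trans (ch_anc Hw) Hwy) in Ha.
by case: (y \in S).
Qed.


Definition spider S x := forall w, w \in ch S x -> chain S w /\ (#|Dset S w| = 1 \/ #|Dset S w| = 2).

Lemma leg1 S w : rooted S -> w \in S -> #|Dset S w| = 1 -> ch S w = set0 /\ Dset S w = [set w].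
Proof. by move=> HS Hw H1; have H0 := chain_leaf Hw H1; split => //; apply: D_leaf. Qed.

Lemma leg2 S w : rooted S -> w \in S -> chain S w -> #|Dset S w| = 2 ->
  exists c, [/\ ch S w = [set c], Dset S w = w |: [set c], ch S c = set0 & c \in ch S w].
Proof.
move=> HS Hw Hch H2.
have H2' : 1 < #|Dset S w| by rewrite H2.
have Hc := chain_next HS Hw Hch H2'.
set c := next S w in Hc.
have Hcc : c \in ch S w by rewrite Hc set11.
have [Ew _] := D_one HS Hw Hc.
have H1 : #|Dset S c| = 1 by move: (D_one_card HS Hw Hc); rewrite H2 => -[].
have [H0 Ec] := leg1 HS (ch_S Hcc) H1.
by exists c; rewrite Ew Ec.
Qed.

Lemma nb_sub S F y : F \subset S -> [set z in F | adj y z] \subset par y |: ch S y.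
Proof.
move=> /subsetP sFS; apply/subsetP => z; rewrite inE => /andP[Hz Hyz].
by rewrite in_setU1; case: (nbr_cases (sFS _ Hz) Hyz) => [->|->]; rewrite ?eqxx ?orbT.
Qed.

Lemma card_le1 (A : {set T}) a : A \subset [set a] -> #|A| <= 1.
Proof. by move/subset_leq_card; rewrite cards1. Qed.

Lemma DS S x : Dset S x \subset S.
Proof. by apply/subsetP => y /D_S. Qed.

Lemma sp_diss1 S x : rooted S -> x \in S -> spider S x -> dissociation adj (Dset S x :\ x).
Proof.
move=> HS Hx Hsp; apply/dissP => y; rewrite in_setD1 => /andP[Hyx Hy].
have [w Hw Hyw] := Dsplit HS Hy Hyx.
have sub := nb_sub y (subset_trans (subsetDl (Dset S x) [set x]) (DS S x)).
have [Hchw [H1|H2]] := Hsp w Hw.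
- have [H0 E] := leg1 HS (ch_S Hw) H1.
  move: Hyw; rewrite E inE => /eqP Ey; subst y.
  apply: (@card_le1 _ (par w)); apply: subset_trans sub _; by rewrite H0 setU0 subxx.
- have [c [Ec Ew Hc0 Hcc]] := leg2 HS (ch_S Hw) Hchw H2.
  move: Hyw; rewrite Ew !inE => /orP[/eqP Ey|/eqP Ey]; subst y.
    apply: (@card_le1 _ (c)); apply/subsetP => z Hz.
    move: (subsetP sub _ Hz); rewrite Ec !inE (ch_par Hw) => /orP[/eqP Ez|//].
    by move: Hz; rewrite !inE Ez eqxx.
  apply: (@card_le1 _ (par c)); apply: subset_trans sub _; by rewrite Hc0 setU0 subxx.
Qed.

Lemma sp_ndiss S x : rooted S -> x \in S -> spider S x ->
  (exists2 w, w \in ch S x & #|Dset S w| = 2) \/ 1 < #|ch S x| -> ~~ dissociation adj (Dset S x).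
Proof.
move=> HS Hx Hsp [[w Hw H2]|].
  have [Hchw _] := Hsp w Hw.
  have [c [Ec Ew Hc0 Hcc]] := leg2 HS (ch_S Hw) Hchw H2.
  have HcD : c \in Dset S x by apply: (subsetP (D_sub Hw)); rewrite Ew setU1r ?set11.
  apply: (@not_diss _ w x c).
  - by apply: (subsetP (D_sub Hw)); apply: D_mem; apply: ch_S Hw.
  - exact: D_mem.
  - exact: HcD.
  - apply/eqP => E; have := ch_d Hcc; rewrite (ch_d Hw) -E; lia.
  - by rewrite adj_sym (ch_adj Hw).
  - exact: ch_adj Hcc.
case/card_gt1P => w1 [w2 [H1 H2 Hne]].
apply: (@not_diss _ x w1 w2) => //.
- exact: D_mem.
- by apply: (subsetP (D_sub H1)); apply: D_mem; apply: ch_S H1.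
- by apply: (subsetP (D_sub H2)); apply: D_mem; apply: ch_S H2.
- exact: ch_adj H1.
- exact: ch_adj H2.
Qed.


Lemma cardsU_disj (A B : {set T}) : (forall y, y \in A -> y \notin B) -> #|A :|: B| = #|A| + #|B|.
Proof.
move=> H; rewrite cardsU; have -> : A :&: B = set0.
  by apply/setP => y; rewrite !inE; case: (boolP (y \in A)) => // /H /negbTE.
by rewrite cards0 subn0.
Qed.

Definition W S k := [set w in ch S v | #|Dset S w| == k].
Definition L2 S := [set y in S | (y != v) && (par y \in W S 2)].

Lemma W_ch S k w : w \in W S k -> w \in ch S v.
Proof. by rewrite inE => /andP[]. Qed.
Lemma W_sz S k w : w \in W S k -> #|Dset S w| = k.
Proof. by rewrite inE => /andP[_ /eqP]. Qed.
Lemma W_par S k w : w \in W S k -> par w = v.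
Proof. by move/W_ch/ch_par. Qed.
Lemma L2_par S y : y \in L2 S -> par y \in W S 2.
Proof. by rewrite inE => /and3P[]. Qed.
Lemma L2_S S y : y \in L2 S -> y \in S.
Proof. by rewrite inE => /and3P[]. Qed.
Lemma L2_nv S y : y \in L2 S -> y != v.
Proof. by rewrite inE => /and3P[]. Qed.
Lemma L2_parv S y : y \in L2 S -> par y != v.
Proof. by move=> /L2_par /W_ch /ch_nv. Qed.

Lemma W_mem S k w : w \in ch S v -> #|Dset S w| = k -> w \in W S k.
Proof. by move=> H1 H2; rewrite /W; apply/setIdP; rewrite H2. Qed.
Lemma L2_mem S y : y \in S -> y != v -> par y \in W S 2 -> y \in L2 S.
Proof. by move=> H1 H2 H3; rewrite /L2; apply/setIdP; rewrite H2 H3. Qed.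

Lemma DSv S : Dset S v = S.
Proof. by apply/setP => y; rewrite inE anc_v andbT. Qed.

Section Final.
Variable S : {set T}.
Hypothesis HS : rooted S.
Hypothesis Hsp : spider S v.

Lemma L2_leaf y : y \in L2 S -> ch S y = set0.
Proof.
move=> Hy; have Hw := L2_par Hy; have Hch := W_ch Hw.
have [Hc _] := Hsp Hch.
have [c [Ec _ Hc0 _]] := leg2 HS (ch_S Hch) Hc (W_sz Hw).
have : y \in ch S (par y) by rewrite inE (L2_S Hy) (L2_nv Hy) eqxx.
by rewrite Ec inE => /eqP ->.
Qed.

Lemma W1_leaf y : y \in W S 1 -> ch S y = set0.
Proof. by move=> Hy; have [] := leg1 HS (ch_S (W_ch Hy)) (W_sz Hy). Qed.

Lemma classify y : y \in S -> y != v -> [|| y \in W S 1, y \in W S 2 | y \in L2 S].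
Proof.
move=> Hy Hyv.
have HyD : y \in Dset S v by rewrite DSv.
have [w Hw Hyw] := Dsplit HS HyD Hyv.
have [Hchw [H1|H2]] := Hsp Hw.
  have [_ E] := leg1 HS (ch_S Hw) H1; move: Hyw; rewrite E in_set1 => /eqP ->.
  by rewrite W_mem.
have [c [Ec Ew Hc0 Hcc]] := leg2 HS (ch_S Hw) Hchw H2.
move: Hyw; rewrite Ew in_setU1 in_set1 => /orP[/eqP ->|/eqP ->].
  by rewrite (W_mem Hw H2) orbT.
by rewrite (L2_mem (ch_S Hcc) (ch_nv Hcc)) ?orbT // (ch_par Hcc) W_mem.
Qed.

Lemma card_L2 : #|L2 S| = #|W S 2|.
Proof.
have -> : W S 2 = par @: L2 S.
  apply/setP => w; apply/idP/imsetP => [Hw|[y Hy ->]]; last exact: L2_par.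
  have Hch := W_ch Hw; have [Hc _] := Hsp Hch.
  have [c [Ec _ _ Hcc]] := leg2 HS (ch_S Hch) Hc (W_sz Hw).
  exists c; last by rewrite (ch_par Hcc).
  by rewrite L2_mem ?(ch_S Hcc) ?(ch_nv Hcc) ?(ch_par Hcc).
rewrite card_in_imset // => y1 y2 H1 H2 E.
have := L2_leaf H1; have Hw := L2_par H1; have Hch := W_ch Hw.
have [Hc _] := Hsp Hch.
have [c [Ec _ _ _]] := leg2 HS (ch_S Hch) Hc (W_sz Hw).
have : y1 \in ch S (par y1) by rewrite inE (L2_S H1) (L2_nv H1) eqxx.
have : y2 \in ch S (par y1) by rewrite inE (L2_S H2) (L2_nv H2) E eqxx.
by rewrite Ec !inE => /eqP -> /eqP ->.
Qed.

Lemma Sv_split : S :\ v = W S 1 :|: W S 2 :|: L2 S.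
Proof.
apply/setP => y; rewrite in_setD1 !in_setU -orbA.
apply/idP/idP => [/andP[Hyv Hy]|H]; first exact: classify.
case/or3P: H => H.
- by rewrite (ch_nv (W_ch H)) (ch_S (W_ch H)).
- by rewrite (ch_nv (W_ch H)) (ch_S (W_ch H)).
- by rewrite (L2_nv H) (L2_S H).
Qed.

Lemma Out_val : Out S = #|W S 1| + 2 * #|W S 2|.
Proof.
have -> : #|W S 1| + 2 * #|W S 2| = #|S :\ v|.
  rewrite Sv_split cardsU_disj; last first.
    move=> y; rewrite in_setU => /orP[] /W_par E; apply/negP => /L2_parv; by rewrite E eqxx.
  rewrite cardsU_disj ?card_L2; first lia.
  by move=> y /W_sz E; apply/negP => /W_sz; rewrite E.
apply/eqP; rewrite eqn_leq; apply/andP; split.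
  apply: MxP_le => F sFS dF vF; apply: subset_leq_card.
  by apply/subsetP => y Hy; rewrite in_setD1 (subsetP sFS _ Hy) andbT; apply: contraNneq vF => <-.
apply: MxP_ge; first exact: subsetDl.
- by have := sp_diss1 HS HS.1 Hsp; rewrite DSv.
- by rewrite /= in_setD1 eqxx.
Qed.

Lemma In_val : In S = (#|W S 2| + minn 1 #|W S 1|).+1.
Proof.
apply/eqP; rewrite eqn_leq; apply/andP; split.
  apply: MxP_le => F sFS dF vF.
  pose f y := if par y == v then y else par y.
  have inj : {in F :\ v &, injective f}.
    move=> y1 y2; rewrite !in_setD1 => /andP[n1 F1] /andP[n2 F2]; rewrite /f.
    have noch a b : a \in F -> b \in F -> a != v -> b != v -> par a = v -> a = par b -> False.
      move=> Fa Fb na nb pa E; move: dF; apply/negP; apply: (@not_diss _ a v b) => //.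
      + by rewrite eq_sym.
      + by rewrite -pa adj_sym par_adj.
      + by rewrite E par_adj.
    case: (eqVneq (par y1) v) => P1; case: (eqVneq (par y2) v) => P2 //.
    - by move=> E; exfalso; apply: (noch y1 y2).
    - by move=> E; exfalso; apply: (noch y2 y1).
    move=> E.
    have L1 : y1 \in L2 S by have := classify (subsetP sFS _ F1) n1; case/or3P => // /W_par P; rewrite P eqxx in P1.
    have L2' : y2 \in L2 S by have := classify (subsetP sFS _ F2) n2; case/or3P => // /W_par P; rewrite P eqxx in P2.
    have Hw := L2_par L1; have Hch := W_ch Hw; have [Hc _] := Hsp Hch.
    have [c [Ec _ _ _]] := leg2 HS (ch_S Hch) Hc (W_sz Hw).
    have : y1 \in ch S (par y1) by rewrite inE (L2_S L1) (L2_nv L1) eqxx.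
    have : y2 \in ch S (par y1) by rewrite inE (L2_S L2') (L2_nv L2') E eqxx.
    by rewrite Ec !inE => /eqP -> /eqP ->.
  have img : f @: (F :\ v) \subset W S 2 :|: (F :&: W S 1).
    apply/subsetP => z /imsetP [y]; rewrite in_setD1 => /andP[ny Fy] ->; rewrite /f.
    have := classify (subsetP sFS _ Fy) ny; case/or3P => H.
    - by rewrite (W_par H) eqxx in_setU in_setI Fy H orbT.
    - by rewrite (W_par H) eqxx in_setU H.
    - by rewrite (negbTE (L2_parv H)) in_setU (L2_par H).
  have c1 : #|F :&: W S 1| <= 1.
    apply: leq_trans (dissP _ dF v vF); apply: subset_leq_card.
    apply/subsetP => y; rewrite in_setI => /andP[Fy Hy]; rewrite inE Fy /=.
    exact: ch_adj (W_ch Hy).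
  have c2 : #|F :&: W S 1| <= #|W S 1| by apply: subset_leq_card; apply: subsetIr.
  have c3 : #|F :\ v| <= #|W S 2| + #|F :&: W S 1|.
    rewrite -(card_in_imset inj); apply: leq_trans (subset_leq_card img) _.
    exact: (leq_card_setU _ _).1.
  rewrite (cardsD1 v F) vF /=; lia.
have low (A : {set T}) : A \subset W S 1 -> #|A| <= 1 -> (#|W S 2| + #|A|).+1 <= In S.
  move=> sA cA.
  have AL a : a \in A -> a \notin L2 S.
    by move=> Ha; apply/negP => /L2_parv; rewrite (W_par (subsetP sA _ Ha)) eqxx.
  have vAL : v \notin A :|: L2 S.
    rewrite in_setU negb_or; apply/andP; split; apply/negP.
      by move/(subsetP sA)/W_ch/ch_nv; rewrite eqxx.
    by move/L2_nv; rewrite eqxx.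
  have -> : (#|W S 2| + #|A|).+1 = #|v |: (A :|: L2 S)|.
    by rewrite cardsU1 vAL cardsU_disj // card_L2 addnC.
  apply: MxP_ge; last by rewrite /= setU11.
    rewrite subUset sub1set HS.1 subUset /=; apply/andP; split.
      by apply: subset_trans sA _; apply/subsetP => y /W_ch /ch_S.
    by apply/subsetP => y /L2_S.
  apply/dissP => y; rewrite !in_setU1 in_setU => /or3P[/eqP ->|Hy|Hy].
  - apply: leq_trans cA; apply: subset_leq_card; apply/subsetP => z.
    rewrite in_set => /andP[Hz Hvz]; rewrite in_setU1 in_setU in Hz.
    have HzS : z \in S.
      by case/or3P: Hz => [/eqP -> | Hz | Hz]; [exact: HS.1 | exact: ch_S (W_ch (subsetP sA _ Hz)) | exact: L2_S Hz].
    case: (nbr_cases HzS Hvz) => [E|Hc].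
      by rewrite E par_v adj_irr in Hvz.
    case/or3P: Hz => [/eqP E|//|/L2_parv]; first by rewrite E adj_irr in Hvz.
    by rewrite (ch_par Hc) eqxx.
  - apply: (@card_le1 _ (par y)); apply: subset_trans (nb_sub y (_ : _ \subset S)) _.
      rewrite subUset sub1set HS.1 subUset /=; apply/andP; split.
        by apply: subset_trans sA _; apply/subsetP => z /W_ch /ch_S.
      by apply/subsetP => z /L2_S.
    by rewrite W1_leaf ?setU0 // (subsetP sA).
  - apply: (@card_le1 _ (par y)); apply: subset_trans (nb_sub y (_ : _ \subset S)) _.
      rewrite subUset sub1set HS.1 subUset /=; apply/andP; split.
        by apply: subset_trans sA _; apply/subsetP => z /W_ch /ch_S.
      by apply/subsetP => z /L2_S.
    by rewrite L2_leaf ?setU0.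
case: (posnP #|W S 1|) => H1.
  have c0 : #|(set0 : {set T})| <= 1 by rewrite cards0.
  have H := low set0 (sub0set _) c0; rewrite cards0 in H; apply: leq_trans H; rewrite H1; lia.
have /card_gt0P [w1 Hw1] := H1.
have := low [set w1]; rewrite sub1set Hw1 cards1 => /(_ isT isT) H.
by apply: leq_trans H; lia.
Qed.

End Final.


Lemma step S S' : rooted S -> prune_step adj v S S' -> rooted S' /\ relIO S S'.
Proof.
move=> HS [u [Hbr Huv Hmax Hcase]].
have Hu : u \in S by case/andP: Hbr.
have NB y : y \in Dset S u -> y != u -> ~~ branch adj S y.
  move=> Hy Hyu; apply/negP => Hb.
  have Hyv : y != v.
    by apply/eqP => E; move: (D_anc Hy); rewrite E => /anc_to_v E'; rewrite E' eqxx in Huv.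
  have := Hmax y (d u) (d y) Hb Hyv (is_dist_d HS Hu) (is_dist_d HS (D_S Hy)).
  by rewrite leqNgt (anc_lt (D_anc Hy)) // eq_sym.
have Hchain w : w \in ch S u -> chain S w.
  move=> Hw y Hy.
  have HyD : y \in Dset S u := subsetP (D_sub Hw) _ Hy.
  have Hyu : y != u.
    by apply/eqP => E; move: (D_anc Hy); rewrite E => /anc_le; rewrite (ch_d Hw) ltnn.
  have Hyv : y != v.
    by apply/eqP => E; move: (D_anc Hy); rewrite E => /anc_to_v E'; rewrite E' in Hw; move: (ch_nv Hw); rewrite eqxx.
  exact: nonbranch_ch HS (D_S Hy) Hyv (NB y HyD Hyu).
rewrite !childrenmod_eq // in Hcase.
case: ifP Hcase => Hc.
  move=> ->; rewrite desc_eq //.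
  split.
    apply: rooted_diff => //; first exact: v_notin_D.
    by move=> y Hy Hp; apply: D_closed.
  have [R1 R2 R3 R4 [R5 R6]] := red_props HS Hu Hchain.
  move: R1 R2 R3 R4 R5 R6; set S1 := Sred S u => R1 R2 R3 R4 R5 R6.
  rewrite -R6; apply: rel_trans R1 _.
  have Hsp : spider S1 u.
    move=> w Hw; have [Hc1 Hc2] := R5 w Hw; split => //.
    move: (Hw); rewrite R4 => /andP[_ Hn]; move: Hn; rewrite Hc2.
    set n := #|Dset S w|; have : n %% 3 < 3 by apply: ltn_pmod.
    by case: (n %% 3) => [|[|[|]]] //; auto.
  apply: rel_one R2.1 (DS _ _) _ _ _.
  - move=> a b Ha Hab Hb Hadj; exact: pendant_D Ha Hab Hb Hadj.
  - apply: type0_crit (D_mem R3) (sp_diss1 R2 R3 Hsp) (sp_ndiss R2 R3 Hsp _).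
    case/orP: Hc => [/card_gt0P [w]|/card_gt1P [w1 [w2 [H1 H2 Hne]]]].
      rewrite in_set => /andP[Hw /eqP Hn]; have Hw' : w \in ch S1 u by rewrite R4 Hw Hn.
      by left; exists w => //; have [_ ->] := R5 w Hw'.
    move: H1 H2; rewrite in_set => /andP[Hw1 /eqP Hn1]; rewrite in_set => /andP[Hw2 /eqP Hn2].
    right; apply/card_gt1P; exists w1, w2; by rewrite !R4 Hw1 Hw2 Hn1 Hn2.
  - exact: v_notin_D.
case => z Hz [Hz1 ->].
rewrite children_eq // in Hz.
have Ebig : \bigcup_(w in children adj v S u :\ z) desc adj v S w = \bigcup_(w <- enum (ch S u :\ z)) Dset S w.
  rewrite children_eq // big_enum; apply: eq_bigr => w; rewrite in_setD1 => /andP[_ Hw].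
  by rewrite desc_eq // (ch_S Hw).
rewrite Ebig.
have Hmod w : w \in ch S u -> w != z -> #|Dset S w| %% 3 = 0.
  move=> Hw Hwz; move/negbT: Hc; rewrite negb_or -!ltnNge ltnS leqn0 cards_eq0 => /andP[/eqP E2 E1].
  have : #|Dset S w| %% 3 < 3 by apply: ltn_pmod.
  case E: (#|Dset S w| %% 3) => [//|[|[|//]]] _.
    have Hw1 : w \in [set w0 in ch S u | #|Dset S w0| %% 3 == 1] by rewrite in_set Hw E.
    have Hcard : #|[set w0 in ch S u | #|Dset S w0| %% 3 == 1]| = 1.
      by apply/eqP; rewrite eqn_leq -ltnS E1 /=; apply/card_gt0P; exists w.
    have Hz' := Hz1 Hcard.
    have : 1 < #|[set w0 in ch S u | #|Dset S w0| %% 3 == 1]| by apply/card_gt1P; exists w, z.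
    by rewrite Hcard.
  have : w \in (set0 : {set T}) by rewrite -E2 in_set Hw E.
  by rewrite inE.
have Hv : v \notin \bigcup_(w <- enum (ch S u :\ z)) Dset S w.
  apply/negP => /bigcup_seqP [w]; rewrite mem_enum in_setD1 => /andP[_ Hw].
  by apply/negP; apply: v_notin_D (ch_nv Hw).
split.
  apply: rooted_diff => // y Hy /bigcup_seqP [w Hw Hpy]; apply/bigcup_seqP; exists w => //.
  exact: D_closed.
apply: (rel_seq (r := id) HS.1 (enum_uniq _)) => [w|w1 w2].
  rewrite mem_enum in_setD1 => /andP[Hwz Hw]; split.
  - exact: DS.
  - move=> a b Ha Hab Hb Hadj; exact: pendant_D Ha Hab Hb Hadj.
  - apply: (chain0 (k := (#|Dset S w| %/ 3).-1) HS (ch_S Hw) (Hchain w Hw)).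
    have Hn1 : 0 < #|Dset S w| by apply/card_gt0P; exists w; exact: D_mem (ch_S Hw).
    move: (Hmod w Hw Hwz) Hn1; set n := #|Dset S w|; lia.
  - exact: v_notin_D (ch_nv Hw).
rewrite !mem_enum !in_setD1 => /andP[_ H1] /andP[_ H2] Hne.
exact: D_disj H1 H2 Hne.
Qed.

Lemma reach S0 S : prune_reach adj v S0 S -> rooted S0 -> rooted S /\ relIO S0 S.
Proof.
elim => [|S1 S2 _ IH Hst] H0; first by split => //; exact: rel_refl.
have [H1 R1] := IH H0; have [H2 R2] := step H1 Hst; split => //; exact: rel_trans R1 R2.
Qed.

Lemma main_section Sbar : is_pruning adj v Sbar ->
  (in_all_max adj v <->
     #|childrenmod adj v Sbar v 2| = 0 /\ #|childrenmod adj v Sbar v 1| <= 1) /\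
  (in_no_max adj v <->
     #|childrenmod adj v Sbar v 2| = 2 \/
     3 <= #|childrenmod adj v Sbar v 1| + #|childrenmod adj v Sbar v 2|).
Proof.
move=> [Hr Hnb].
have HT : rooted [set: T] by split => [|x _]; rewrite inE.
have [HS R] := reach Hr HT.
have Hv := HS.1.
have Hch w : w \in ch Sbar v -> chain Sbar w.
  move=> Hw y Hy.
  have Hyv : y != v.
    by apply/eqP => E; move: (D_anc Hy); rewrite E => /anc_to_v E'; rewrite E' in Hw; move: (ch_nv Hw); rewrite eqxx.
  exact: nonbranch_ch HS (D_S Hy) Hyv (Hnb y (D_S Hy) Hyv).
have [R1 R2 R3 R4 [R5 _]] := red_props HS Hv Hch.
move: R1 R2 R3 R4 R5; set S1 := Sred Sbar v => R1 R2 R3 R4 R5.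
have Hsp : spider S1 v.
  move=> w Hw; have [Hc1 Hc2] := R5 w Hw; split => //.
  move: (Hw); rewrite R4 => /andP[_ Hn]; move: Hn; rewrite Hc2.
  set n := #|Dset Sbar w|; have : n %% 3 < 3 by apply: ltn_pmod.
  by case: (n %% 3) => [|[|[|]]] //; auto.
have EK k : k != 0 -> #|childrenmod adj v Sbar v k| = #|W S1 k|.
  move=> Hk; rewrite childrenmod_eq //; apply: eq_card => w; rewrite /W [LHS]in_set [RHS]in_set.
  rewrite R4.
  case: (boolP (w \in ch Sbar v)) => Hw //=.
  case: (boolP (#|Dset Sbar w| %% 3 == 0)) => Hn /=.
    by rewrite (eqP Hn) eq_sym (negbTE Hk).
  have Hw1 : w \in ch S1 v by rewrite R4 Hw Hn.
  by have [_ ->] := R5 w Hw1.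
rewrite !EK //.
have [c [Ic Oc]] := rel_trans R R1.
have HIn := In_val R2 Hsp.
have HOut := Out_val R2 Hsp.
rewrite all_iff no_iff Ic Oc HIn HOut.
set k1 := #|W S1 1|; set k2 := #|W S1 2|.
split; split; lia.
Qed.

End Tree.

Unset Implicit Arguments.

Theorem theorem3p1 (T : finType) (adj : rel T) (v : T) (Sbar : {set T}) :
  simple_graph adj -> is_tree adj ->
  is_pruning adj v Sbar ->
  (in_all_max adj v <->
     #|childrenmod adj v Sbar v 2| = 0 /\ #|childrenmod adj v Sbar v 1| <= 1) /\
  (in_no_max adj v <->
     #|childrenmod adj v Sbar v 2| = 2 \/
     3 <= #|childrenmod adj v Sbar v 1| + #|childrenmod adj v Sbar v 2|).
Proof.
move=> [Hsym Hirr] [_ Hconn Hacyc] Hp.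
exact: (main_section Hsym Hirr Hconn Hacyc Hp).
Qed.
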